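(* Let $p$ be an odd prime, $\lambda$ a partition, and suppose that for some abacus display of $\lambda$ the runners $i,j\in\{0,\dots,p-1\}$ satisfy conditions (F1), (F2), (F3). If $\kappa_p(\lambda)\ne\lambda$, then $i\ne j$.
   Context: Abacus: for $\lambda$ with at most $s$ nonzero parts, $\beta_k=\lambda_k-k+s$ ($1\le k\le s$). Position $q\ge0$ lies on runner $q\bmod p$ and is occupied iff $q$ equals some $\beta_k$. For runner $t$, $\lambda^{(t)}$ is the partition whose $m$-th part is the number of unoccupied positions on runner $t$ smaller than the $m$-th largest occupied position on runner $t$. (F1) $\lambda^{(k)}=\varnothing$ for all $k\notin\{i,j\}$; (F2) if position $i+ap$ is unoccupied then every position $b>i+ap$ not on runner $i$ is unoccupied; (F3) if position $j+cp$ is occupied then every position $d<j+cp$ not on runner $j$ is occupied. $\kappa_p(\lambda)$ is the $p$-core of $\lambda$. *)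

(* Defs.v *)
From mathcomp Require Import all_boot.
Set Implicit Arguments. Unset Strict Implicit. Unset Printing Implicit Defensive.

Definition is_partition (lam : seq nat) : bool :=
  sorted geq lam && all (fun x => 0 < x) lam.

(* Beta-numbers with s beads (s >= size lam):
   beta_k = lam_k - k + s for 1 <= k <= s  (0-indexed: k -> k.+1).
   Listed in strictly decreasing order. *)
Definition beta (s : nat) (lam : seq nat) : seq nat :=
  [seq nth 0 lam k + s - k.+1 | k <- iota 0 s].

Definition occupied (s : nat) (lam : seq nat) (q : nat) : bool :=
  q \in beta s lam.

(* lam^(t): the m-th part is the number of unoccupied positions on runner t
   smaller than the m-th largest occupied position on runner t
   (zero parts dropped). *)
Definition quotient_part (p s : nat) (lam : seq nat) (t : nat) : seq nat :=
  [seq x <- [seq count (fun q => (q %% p == t) && ~~ occupied s lam q) (iota 0 b)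
            | b <- [seq b <- beta s lam | b %% p == t]] | 0 < x].

Definition F1 (p s : nat) (lam : seq nat) (i j : nat) : Prop :=
  forall k, k < p -> k != i -> k != j -> quotient_part p s lam k = [::].

Definition F2 (p s : nat) (lam : seq nat) (i : nat) : Prop :=
  forall a, ~~ occupied s lam (i + a * p) ->
  forall b, i + a * p < b -> b %% p != i -> ~~ occupied s lam b.

Definition F3 (p s : nat) (lam : seq nat) (j : nat) : Prop :=
  forall c, occupied s lam (j + c * p) ->
  forall d, d < j + c * p -> d %% p != j -> occupied s lam d.

Definition part_of_beta (B : seq nat) : seq nat :=
  let s := size B in
  let B' := sort geq B in
  [seq x <- [seq nth 0 B' k + k.+1 - s | k <- iota 0 s] | 0 < x].

(* Beta-set of the p-core: on each runner t push all beads up. *)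
Definition core_beta (p s : nat) (lam : seq nat) : seq nat :=
  flatten [seq [seq t + m * p | m <- iota 0 (count (fun b => b %% p == t) (beta s lam))]
          | t <- iota 0 p].

Definition kappa (p : nat) (lam : seq nat) : seq nat :=
  part_of_beta (core_beta p (size lam) lam).

(* Main.v *)
Require Import Defs.
From mathcomp Require Import all_boot zify.

Lemma down_closed (p t : nat) (S : seq nat) :
  (forall x, x \in S -> p <= x -> x - p \in S) ->
  forall d k, t + (k + d) * p \in S -> t + k * p \in S.
Proof.
move=> H; elim=> [|d IH] k; first by rewrite addn0.
move=> Hin; apply: IH.
have E: t + (k + d) * p = t + (k + d.+1) * p - p by rewrite addnS mulSn; lia.
rewrite E; apply: H => //; rewrite addnS mulSn; lia.
Qed.

Lemma runner_perm (p t : nat) (S : seq nat) : 0 < p -> t < p -> uniq S ->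
  (forall x, x \in S -> x %% p = t) ->
  (forall x, x \in S -> p <= x -> x - p \in S) ->
  perm_eq S [seq t + m * p | m <- iota 0 (size S)].
Proof.
move=> p0 tp uS Hr Hd.
have inj: injective (fun m => t + m * p).
  by move=> a b /eqP; rewrite eqn_add2l eqn_pmul2r // => /eqP.
apply: uniq_perm => //; first by rewrite map_inj_uniq ?iota_uniq.
move=> x; apply/idP/idP.
- move=> xS; apply/mapP.
  have ex: x = t + (x %/ p) * p by rewrite {1}(divn_eq x p) Hr // addnC.
  exists (x %/ p); last by [].
  rewrite mem_iota add0n.
  have sub: {subset [seq t + m * p | m <- iota 0 (x %/ p).+1] <= S}.
    move=> y /mapP [m]; rewrite mem_iota add0n ltnS => mle ->.
    apply: (@down_closed p t S Hd (x %/ p - m)).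
    by rewrite subnKC // -ex.
  have := uniq_leq_size (_ : uniq [seq t + m * p | m <- iota 0 (x %/ p).+1]) sub.
  rewrite size_map size_iota; apply; by rewrite map_inj_uniq ?iota_uniq.
- case/mapP=> m; rewrite mem_iota add0n => mlt ->.
  apply/negPn/negP => nin.
  have sub: {subset S <= [seq t + m * p | m <- iota 0 m]}.
    move=> y yS; apply/mapP; exists (y %/ p); last first.
      by rewrite {1}(divn_eq y p) Hr // addnC.
    rewrite mem_iota add0n; apply/negPn/negP; rewrite -leqNgt => my.
    idtac.
    move/negP: nin; apply; apply: (@down_closed p t S Hd (y %/ p - m)).
    rewrite subnKC // -(Hr y yS) addnC -divn_eq //.
  have := uniq_leq_size uS sub.
  rewrite size_map size_iota.
  by move=> h; move: mlt; rewrite ltnNge h andbF.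
Qed.

Lemma split_runners (f : nat -> nat) (s : seq nat) n :
  perm_eq [seq x <- s | f x < n] (flatten [seq [seq x <- s | f x == t] | t <- iota 0 n]).
Proof.
elim: n => [|n IH].
  by rewrite /= (@eq_filter _ _ pred0) ?filter_pred0 // => x.
rewrite -addn1 iotaD map_cat flatten_cat /= cats0 add0n.
rewrite -(perm_filterC (fun x => f x < n) [seq x <- s | f x < n + 1]).
rewrite -!filter_predI.
apply: perm_cat.
  rewrite (@eq_filter _ _ (fun x => f x < n)) // => x /=; lia.
rewrite (@eq_filter _ _ (fun x => f x == n)) // => x /=; lia.
Qed.

Lemma beta_sorted s lam : is_partition lam -> size lam <= s -> sorted gtn (beta s lam).
Proof.
case/andP=> srt _ sz.
apply/(sortedP 0) => k; rewrite /beta size_map size_iota => ks.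
rewrite !(nth_map 0) ?size_iota ?nth_iota //; try lia.
rewrite /= !add0n.
have : nth 0 lam k.+1 <= nth 0 lam k.
  case: (ltnP k.+1 (size lam)) => h.
    have tr : transitive geq by move=> a b c /= h1 h2; apply: leq_trans h1.
    have := sorted_ltn_nth tr 0 srt.
    move=> H; apply: (H k k.+1) => //; rewrite inE; lia.
  by rewrite nth_default.
lia.
Qed.

Lemma perm_flatten_map (T : eqType) (F G : nat -> seq T) (L : seq nat) :
  (forall t, t \in L -> perm_eq (F t) (G t)) ->
  perm_eq (flatten (map F L)) (flatten (map G L)).
Proof.
elim: L => [|a L IH] H //=.
apply: perm_cat; first by apply: H; rewrite inE eqxx.
by apply: IH => t tL; apply: H; rewrite inE tL orbT.
Qed.

Lemma aux_arith a b k n : k < n -> a = b -> a + n - (0 + k).+1 + k.+1 - n = b.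
Proof. move=> ? ->; lia. Qed.

Lemma core_of_closed p lam : 0 < p -> is_partition lam ->
  (forall q, occupied (size lam) lam q -> p <= q -> occupied (size lam) lam (q - p)) ->
  kappa p lam = lam.
Proof.
move=> p0 lamP Hc.
set n := size lam.
have sB : sorted gtn (beta n lam) by apply: beta_sorted.
have uB : uniq (beta n lam).
  by apply: (sorted_uniq (leT := gtn)) => // [a b c /= h1 h2|a /=];
     [apply: ltn_trans h1|rewrite ltnn].
have sB' : sorted geq (beta n lam).
  by apply: sub_sorted sB => a b /= /ltnW.
have Hperm : perm_eq (beta n lam) (core_beta p n lam).
  have E : beta n lam = [seq x <- beta n lam | x %% p < p].
    by apply/esym/all_filterP/allP => x _; rewrite ltn_mod.
  rewrite {1}E; apply: perm_trans (split_runners _ _ _) _.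
  rewrite /core_beta; apply: perm_flatten_map => t; rewrite mem_iota add0n => tp.
  rewrite -size_filter.
  apply: runner_perm => //; first by rewrite filter_uniq.
    by move=> x; rewrite mem_filter => /andP [/eqP].
  move=> x; rewrite !mem_filter => /andP [/eqP xt xB] px.
  apply/andP; split; last by apply: Hc.
  by rewrite -xt -{2}(subnK px) modnDr.
have Hsort : sort geq (core_beta p n lam) = beta n lam.
  apply: (sorted_eq (leT := geq)).
  - by move=> a b c /= h1 h2; apply: leq_trans h1.
  - by move=> a b /andP [h1 h2] /=; apply/eqP; rewrite eqn_leq; apply/andP; split.
  - by apply: sort_sorted => a b; apply: leq_total.
  - by [].
  - by rewrite perm_sort perm_sym.
rewrite /kappa /part_of_beta Hsort -(perm_size Hperm) /beta size_map size_iota -/n.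
have -> : [seq nth 0 [seq nth 0 lam k + n - k.+1 | k <- iota 0 n] k + k.+1 - n | k <- iota 0 n]
   = [seq nth 0 lam k | k <- iota 0 n].
  apply/eq_in_map => k; rewrite mem_iota add0n => kn.
  rewrite (nth_map 0) ?size_iota ?nth_iota //.
case/andP: kn => _ kn.
by apply: (@aux_arith _ _ k n kn).
have -> : [seq nth 0 lam k | k <- iota 0 n] = lam by exact: (mkseq_nth 0 lam).
by apply/all_filterP; case/andP: lamP.
Qed.

Lemma occ_shift s lam q : size lam <= s -> occupied (size lam) lam q ->
  occupied s lam (q + (s - size lam)).
Proof.
move=> sz; rewrite /occupied /beta => /mapP [k]; rewrite mem_iota add0n => kn ->.
apply/mapP; exists k; first by rewrite mem_iota add0n; lia.
lia.
Qed.

Lemma occ_unshift s lam q : size lam <= s -> occupied s lam q -> s - size lam <= q ->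
  occupied (size lam) lam (q - (s - size lam)).
Proof.
move=> sz; rewrite /occupied /beta => /mapP [k]; rewrite mem_iota add0n => ks -> h.
case: (ltnP k (size lam)) => kn.
  apply/mapP; exists k; first by rewrite mem_iota add0n.
  lia.
move: h; rewrite nth_default //; lia.
Qed.

Lemma modn_subp p q : p <= q -> (q - p) %% p = q %% p.
Proof. by move=> pq; rewrite -{2}(subnK pq) modnDr. Qed.

Lemma closure_s p s lam i : 1 < p -> i < p ->
  F1 p s lam i i -> F2 p s lam i -> F3 p s lam i ->
  forall q, occupied s lam q -> p <= q -> occupied s lam (q - p).
Proof.
move=> p1 ip H1 H2 H3 q qo pq.
case: (eqVneq (q %% p) i) => qi.
  apply/negPn/negP => nocc.
  have e : i + (q - p) %/ p * p = q - p.
    by rewrite {2}(divn_eq (q - p) p) addnC modn_subp // qi.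
  have e2 : i + ((q - p) %/ p).+1 * p = q by rewrite mulSn addnCA e subnKC.
  have m1 : (q - p + 1) %% p != i.
    rewrite -e addnAC addnC modnMDl.
    case: (ltnP i.+1 p) => h; first by rewrite addn1 modn_small //; lia.
    have -> : i + 1 = p by lia.
    rewrite modnn; lia.
  have nocc' : ~~ occupied s lam (i + (q - p) %/ p * p) by rewrite e.
  have lt1 : i + (q - p) %/ p * p < q - p + 1 by rewrite e addn1.
  have := H2 _ nocc' (q - p + 1) lt1 m1.
  have o2 : occupied s lam (i + ((q - p) %/ p).+1 * p) by rewrite e2.
  have lt2 : q - p + 1 < i + ((q - p) %/ p).+1 * p by rewrite e2; lia.
  by move/negP; apply; apply: (H3 _ o2 _ lt2 m1).
have qp : q %% p < p by rewrite ltn_mod; lia.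
have := H1 (q %% p) qp qi qi.
rewrite /quotient_part.
set x := count (fun q0 => (q0 %% p == q %% p) && ~~ occupied s lam q0) (iota 0 q).
have xin : x \in [seq count (fun q0 => (q0 %% p == q %% p) && ~~ occupied s lam q0) (iota 0 b)
            | b <- [seq b <- beta s lam | b %% p == q %% p]].
  by apply/mapP; exists q => //; rewrite mem_filter eqxx.
case: (posnP x) => x0; last first.
  by move=> h; have : x \in [::] by rewrite -h mem_filter x0.
move=> _; move/eqP: x0; rewrite -leqn0 leqNgt -has_count => /hasPn /(_ (q - p)).
rewrite mem_iota add0n.
rewrite modn_subp //.
rewrite eqxx /= negbK; apply; lia.
Qed.

Theorem lemma4p5 (p : nat) (lam : seq nat) (i j : nat) :
  prime p -> odd p -> is_partition lam -> i < p -> j < p ->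
  (exists s, size lam <= s /\ F1 p s lam i j /\ F2 p s lam i /\ F3 p s lam j) ->
  kappa p lam <> lam -> i <> j.
Proof.
move=> pp _ lamP ip jp [s [sz [H1 [H2 H3]]]] nk eij; subst j.
apply: nk; apply: core_of_closed => //; first exact: prime_gt0.
move=> q qo pq.
have p1 := prime_gt1 pp.
have o1 := @occ_shift s lam q sz qo.
have o2 := @closure_s p s lam i p1 ip H1 H2 H3 _ o1 (leq_trans pq (leq_addr _ _)).
have h : s - size lam <= q + (s - size lam) - p by lia.
have := @occ_unshift s lam _ sz o2 h.
by have -> : q + (s - size lam) - p - (s - size lam) = q - p by lia.
Qed.
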